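(* Let $(a,b)$ be a coprime pair of positive integers, let $W=W_1\cdots W_N=W(a,b)$, let $n_L$ and $n_R$ be the numbers of letters $L$ and $R$ in $W$, and let the integers $a_j$ ($-n_R\le j\le n_L$, $j\neq 0$), $c$, and $\overline{a}_j$ ($-n_L\le j\le n_R$) be constructed as described in the context. Then \[(a_1,a_2,\dots,a_{n_L},\,c,\,a_{-n_R},\dots,a_{-2},a_{-1})=(\overline{a}_{-n_L},\dots,\overline{a}_0,\dots,\overline{a}_{n_R}).\]
   Context: Word: for coprime positive $(a,b)$, set $(a_0,b_0)=(a,b)$; if $a_i>b_i$ let $w_{i+1}=L$, $(a_{i+1},b_{i+1})=(a_i-b_i,b_i)$; if $a_i<b_i$ let $w_{i+1}=R$, $(a_{i+1},b_{i+1})=(a_i,b_i-a_i)$; stop at the first $N$ with $(a_N,b_N)=(1,1)$. Then $w(a,b)=w_1\cdots w_N$ and $W(a,b)=W_1\cdots W_N$ with $W_i=w_{N+1-i}$. First sequence: each $\{a^{(i)}_j\}$ is a finite integer sequence indexed by the consecutive integers $m(i)\le j\le M(i)$ (the minimal and maximal defined index). Start with $(a^{(0)}_{-1},a^{(0)}_0,a^{(0)}_1)=(-1,-1,-1)$. For $i=1,\dots,N$, always $a^{(i)}_0=-1$, and: if $W_i=R$, set $a^{(i)}_j=a^{(i-1)}_j$ for $1<j\le M(i-1)$, $a^{(i)}_1=a^{(i-1)}_1-1$, $a^{(i)}_{-1}=-2$, and $a^{(i)}_j=a^{(i-1)}_{j+1}$ for $m(i-1)-1\le j<-1$; if $W_i=L$,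 set $a^{(i)}_j=a^{(i-1)}_j$ for $m(i-1)\le j<-1$, $a^{(i)}_{-1}=a^{(i-1)}_{-1}-1$, $a^{(i)}_1=-2$, and $a^{(i)}_j=a^{(i-1)}_{j-1}$ for $1<j\le M(i-1)+1$. After $N$ steps the index range is $-(n_R+1)\le j\le n_L+1$; put $a_j=a^{(N)}_j$ for $-n_R\le j\le n_L$, $j\ne0$, and $c=a^{(N)}_{n_L+1}+a^{(N)}_{-(n_R+1)}-2$. Second sequence: each $\{\overline{a}^{(i)}_j\}$ is indexed by consecutive integers $m(i)\le j\le M(i)$. Start with $\overline{a}^{(0)}_0=-4$. If $W_i=R$: $\overline{a}^{(i)}_{M(i-1)+1}=-2$, $\overline{a}^{(i)}_{m(i-1)}=\overline{a}^{(i-1)}_{m(i-1)}-1$, and $\overline{a}^{(i)}_j=\overline{a}^{(i-1)}_j$ for $m(i-1)<j\le M(i-1)$. If $W_i=L$: $\overline{a}^{(i)}_{M(i-1)}=\overline{a}^{(i-1)}_{M(i-1)}-1$, $\overline{a}^{(i)}_{m(i-1)-1}=-2$, and $\overline{a}^{(i)}_j=\overline{a}^{(i-1)}_j$ for $m(i-1)\le j<M(i-1)$. Put $\overline{a}_j=\overline{a}^{(N)}_j$, $-n_L\le j\le n_R$. *)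

(* Defs.v *)
From Stdlib Require Import ZArith List Arith Bool.
Import ListNotations.
Open Scope bool_scope.
Open Scope Z_scope.

Inductive letter := L | R.

(* w(a,b) by the subtractive Euclidean algorithm, with fuel; for coprime
   positive a, b the fuel a+b is more than enough to reach (1,1). *)
Fixpoint wfuel (k : nat) (a b : nat) : list letter :=
  match k with
  | O => []
  | S k' =>
      if andb (Nat.eqb a 1) (Nat.eqb b 1) then []
      else if Nat.ltb b a then L :: wfuel k' (a - b)%nat b
      else if Nat.ltb a b then R :: wfuel k' a (b - a)%nat
      else []
  end.

Definition w (a b : nat) : list letter := wfuel (a + b)%nat a b.
Definition W (a b : nat) : list letter := rev (w a b).

Definition isL (x : letter) : bool := match x with L => true | R => false end.
Definition isR (x : letter) : bool := match x with L => false | R => true end.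
Definition nL (s : list letter) : nat := length (filter isL s).
Definition nR (s : list letter) : nat := length (filter isR s).

(* A finite integer sequence indexed by m <= j <= M (value 0 outside). *)
Record zseq := ZSeq { lo : Z; hi : Z; val : Z -> Z }.

Definition a0 : zseq := ZSeq (-1) 1 (fun j => if (-1 <=? j) && (j <=? 1) then -1 else 0).

Definition stepA (s : zseq) (x : letter) : zseq :=
  let m := lo s in let M := hi s in let f := val s in
  match x with
  | R => ZSeq (m - 1) M (fun j =>
           if (1 <? j) && (j <=? M) then f j
           else if j =? 1 then f 1 - 1
           else if j =? 0 then -1
           else if j =? -1 then -2
           else if (m - 1 <=? j) && (j <? -1) then f (j + 1)
           else 0)
  | L => ZSeq m (M + 1) (fun j =>
           if (m <=? j) && (j <? -1) then f j
           else if j =? -1 then f (-1) - 1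
           else if j =? 0 then -1
           else if j =? 1 then -2
           else if (1 <? j) && (j <=? M + 1) then f (j - 1)
           else 0)
  end.

Definition seqA (Wd : list letter) : zseq := fold_left stepA Wd a0.

Definition a_ (Wd : list letter) (j : Z) : Z := val (seqA Wd) j.
Definition c_ (Wd : list letter) : Z :=
  val (seqA Wd) (Z.of_nat (nL Wd) + 1) + val (seqA Wd) (- (Z.of_nat (nR Wd) + 1)) - 2.

Definition b0 : zseq := ZSeq 0 0 (fun j => if j =? 0 then -4 else 0).

Definition stepB (s : zseq) (x : letter) : zseq :=
  let m := lo s in let M := hi s in let f := val s in
  match x with
  | R => ZSeq m (M + 1) (fun j =>
           if j =? M + 1 then -2
           else if j =? m then f m - 1
           else if (m <? j) && (j <=? M) then f j
           else 0)
  | L => ZSeq (m - 1) M (fun j =>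
           if j =? M then f M - 1
           else if j =? m - 1 then -2
           else if (m <=? j) && (j <? M) then f j
           else 0)
  end.

Definition seqB (Wd : list letter) : zseq := fold_left stepB Wd b0.
Definition abar_ (Wd : list letter) (j : Z) : Z := val (seqB Wd) j.

Definition lhs_list (Wd : list letter) : list Z :=
  map (fun k => a_ Wd (Z.of_nat k)) (seq 1 (nL Wd))
  ++ [c_ Wd]
  ++ map (fun k => a_ Wd (Z.of_nat k - Z.of_nat (nR Wd))) (seq 0 (nR Wd)).

Definition rhs_list (Wd : list letter) : list Z :=
  map (fun k => abar_ Wd (Z.of_nat k - Z.of_nat (nL Wd))) (seq 0 (nL Wd + nR Wd + 1)).

(* Main.v *)
Require Import Defs.
From Stdlib Require Import ZArith List Arith Lia.
Import ListNotations.

Definition inv (Wd : list letter) : Prop :=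
  let A := seqA Wd in let B := seqB Wd in
  let nl := Z.of_nat (nL Wd) in let nr := Z.of_nat (nR Wd) in
  lo A = -(nr+1) /\ hi A = nl + 1 /\ lo B = - nl /\ hi B = nr /\
  (forall j, -nl <= j < 0 -> val B j = val A (j + nl + 1)) /\
  val B 0 = val A (nl+1) + val A (-(nr+1)) - 2 /\
  (forall j, 0 < j <= nr -> val B j = val A (j - nr - 1)).

Lemma nL_app l x : nL (l ++ [x]) = (nL l + if isL x then 1 else 0)%nat.
Proof. unfold nL; rewrite filter_app, length_app; destruct x; simpl; lia. Qed.
Lemma nR_app l x : nR (l ++ [x]) = (nR l + if isR x then 1 else 0)%nat.
Proof. unfold nR; rewrite filter_app, length_app; destruct x; simpl; lia. Qed.

Ltac zcases := repeat match goal with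
  | |- context [Z.eqb ?a ?b] => destruct (Z.eqb_spec a b)
  | |- context [Z.ltb ?a ?b] => destruct (Z.ltb_spec a b)
  | |- context [Z.leb ?a ?b] => destruct (Z.leb_spec a b)
  end; cbn [andb]; try lia.

Ltac fa_eqs f := repeat match goal with
  | |- context [f ?X] => match goal with |- context [f ?Y] =>
      assert_fails (constr_eq X Y);
      lazymatch goal with | _ : f X = f Y |- _ => fail | _ => idtac end;
      assert (f X = f Y) by (f_equal; lia) end end.

Lemma inv_all Wd : inv Wd.
Proof.
  induction Wd as [|x l IH] using rev_ind.
  - unfold inv; simpl. repeat split; intros; try lia. 
  - unfold inv, seqA, seqB in *. rewrite !fold_left_app. simpl.
    rewrite nL_app, nR_app.
    destruct (fold_left stepA l a0) as [la ha fa].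
    destruct (fold_left stepB l b0) as [lb hb fb]. simpl in *.
    set (nl := Z.of_nat (nL l)) in *. set (nr := Z.of_nat (nR l)) in *.
    destruct IH as (H1 & H2 & H3 & H4 & H5 & H6 & H7). subst.
    destruct x; cbn [val lo hi stepA stepB isL isR]; rewrite ?Nat.add_0_r, ?Nat2Z.inj_add; change (Z.of_nat 1) with 1; fold nl nr;
    repeat split; try lia;
    intros; zcases; first [rewrite H5 by lia | rewrite H7 by lia | rewrite H6 | idtac]; zcases;
    first [reflexivity | (f_equal; lia) | (f_equal; f_equal; lia) | (f_equal; f_equal; [f_equal; lia | f_equal; lia]) | idtac].
    all: try (match goal with e : 0 = ?n |- _ => rewrite <- e in * end);
      try rewrite H6; try rewrite H5 by lia; fa_eqs fa; lia.
Qed.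

Lemma map_seq_shift (f : nat -> Z) s n :
  map f (seq s n) = map (fun i => f (s+i)%nat) (seq 0 n).
Proof.
  induction n; auto. rewrite !seq_S, !map_app, IHn. reflexivity.
Qed.

Lemma main_gen Wd : lhs_list Wd = rhs_list Wd.
Proof.
  destruct (inv_all Wd) as (H1 & H2 & H3 & H4 & H5 & H6 & H7).
  unfold lhs_list, rhs_list, a_, c_, abar_.
  replace (nL Wd + nR Wd + 1)%nat with (nL Wd + (1 + nR Wd))%nat by lia.
  rewrite !seq_app, !map_app. simpl.
  f_equal; [|f_equal].
  - rewrite (map_seq_shift _ 1), (map_seq_shift _ 0).
    apply map_ext_in. intros i Hi. apply in_seq in Hi.
    rewrite H5 by lia. f_equal. lia.
  - rewrite Z.sub_diag, H6. reflexivity.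
  - rewrite (map_seq_shift _ (nL Wd + 1)).
    apply map_ext_in. intros i Hi. apply in_seq in Hi.
    rewrite H7 by lia. f_equal. lia.
Qed.

Theorem lemma2p4 (a b : nat) :
  (0 < a)%nat -> (0 < b)%nat -> Nat.gcd a b = 1%nat ->
  lhs_list (W a b) = rhs_list (W a b).
Proof.
  intros. apply main_gen.
Qed.
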